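(* Let $G=(V,E)$ be a directed graph, $s\neq t$ vertices, $k\ge 1$ an integer and $e(u,v)\in E$. If $e(u,v)$ is an edge of $SPG_k(s,t)$, then there exist integers $k_f,k_b\ge 0$ such that $EV^*_{k_f}(s,u)$ and $EV^*_{k_b}(v,t)$ both exist, (1) $k_f+1+k_b\le k$, and (2) $EV^*_{k_f}(s,u)\cap EV^*_{k_b}(v,t)=\emptyset$. The converse does not hold in general: there exist $G,s,t,k$ and an edge $e(u,v)$ admitting such $k_f,k_b$ with $e(u,v)\notin SPG_k(s,t)$.
   Context: A path from $x$ to $y$ in $G$ is a vertex sequence $x=v_0,\dots,v_l=y$ with $(v_{i-1},v_i)\in E$; its length is $l$ and $V(p)$, $E(p)$ are its vertex and edge sets. A simple path has no repeated vertex. $SPG_k(s,t)$ is the subgraph of $G$ formed by the union of vertex sets and edge sets of all simple paths from $s$ to $t$ of length at most $k$. For a vertex $u$ and integer $l\ge 0$, $EV^*_l(s,u)$ exists iff there is at least one simple path from $s$ to $u$ of length at most $l$ not containing $t$, and then $EV^*_l(s,u)$ is the intersection of $V(p)$ over all such paths. Symmetrically, $EV^*_l(v,t)$ exists iff there is at least one simple path from $v$ to $t$ of length at most $l$ not containing $s$, and then it is the intersection of $V(p)$ over all such paths. *)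

(* Defs.v *)
(* A directed graph G = (V,E) is a finite type V with an edge
   relation E : rel V (self-loops allowed, irrelevant for simple paths). *)
From mathcomp Require Import all_boot.
Set Implicit Arguments. Unset Strict Implicit. Unset Printing Implicit Defensive.

Section Paths.
Variables (V : finType) (E : rel V).

(* A path from x to y is the vertex sequence x :: p with consecutive pairs in E
   and last vertex y; its length is size p; V(path) = x :: p. *)
Definition gpath (x y : V) (p : seq V) : bool := path E x p && (last x p == y).

Definition simple_path (x y : V) (p : seq V) : bool := gpath x y p && uniq (x :: p).

Definition path_edges (x : V) (p : seq V) : seq (V * V) := zip (x :: p) p.

Definition SPG_edge (k : nat) (s t u v : V) : Prop :=
  exists p, [/\ simple_path s t p, size p <= k & (u, v) \in path_edges s p].

Definition avoid_spath (z : V) (l : nat) (a b : V) (p : seq V) : Prop :=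
  [/\ simple_path a b p, size p <= l & z \notin a :: p].

Definition EV_exists (z : V) (l : nat) (a b : V) : Prop :=
  exists p, avoid_spath z l a b p.

Definition EV (z : V) (l : nat) (a b : V) : V -> Prop :=
  fun x => forall p, avoid_spath z l a b p -> x \in a :: p.

End Paths.

(* EV*_l(s,u): paths from s to u avoiding t;  EV*_l(v,t): paths from v to t avoiding s *)
Definition EVf (V : finType) (E : rel V) (s t : V) (l : nat) (u : V) := EV E t l s u.
Definition EVf_exists (V : finType) (E : rel V) (s t : V) (l : nat) (u : V) :=
  EV_exists E t l s u.
Definition EVb (V : finType) (E : rel V) (s t : V) (l : nat) (v : V) := EV E s l v t.
Definition EVb_exists (V : finType) (E : rel V) (s t : V) (l : nat) (v : V) :=
  EV_exists E s l v t.

Definition edge_condition (V : finType) (E : rel V) (k : nat) (s t u v : V) : Prop :=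
  exists kf kb : nat,
    [/\ EVf_exists E s t kf u, EVb_exists E s t kb v, kf + 1 + kb <= k
      & forall x, ~ (EVf E s t kf u x /\ EVb E s t kb v x)].

(* Main.v *)
Require Import Defs.
From mathcomp Require Import all_boot.

Lemma zip_split (V : eqType) (u v : V) (p : seq V) (x : V) :
  (u, v) \in zip (x :: p) p -> exists a b, p = a ++ v :: b /\ last x a = u.
Proof.
elim: p x => [|y p IH] x //=.
rewrite in_cons => /orP[/eqP [-> ->]|H].
  by exists [::], p.
have [a [b [-> Hl]]] := IH y H.
by exists (y :: a), b.
Qed.

Fixpoint seqs (V : eqType) (l : seq V) (n : nat) : seq (seq V) :=
  if n is n'.+1 then [::] :: [seq x :: p | x <- l, p <- seqs V l n'] else [:: [::]].

Lemma seqs_mem (V : eqType) (l : seq V) n (p : seq V) :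
  (forall x, x \in l) -> size p <= n -> p \in seqs V l n.
Proof.
move=> Hl; elim: n p => [|n IH] [|x p] //=.
move=> Hs; rewrite in_cons /=; apply/allpairsP.
by exists (x, p); rewrite /= Hl IH.
Qed.

Definition Eex : rel 'I_6 := fun x y =>
  (val x, val y) \in [:: (0,1); (0,2); (1,3); (2,3); (3,4); (4,1); (1,2); (2,5)]%N.

Definition o (n : nat) : 'I_6 := @Ordinal 6 (n %% 6) (@ltn_pmod n 6 isT).
Definition L6 := [:: o 0; o 1; o 2; o 3; o 4; o 5].
Lemma L6P x : x \in L6.
Proof. by case: x => [[|[|[|[|[|[|m]]]]]] Hm] //; vm_compute. Qed.

Theorem lemma3p3 :
  (forall (V : finType) (E : rel V) (s t : V) (k : nat) (u v : V),
      s != t -> 1 <= k -> E u v ->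
      SPG_edge E k s t u v -> edge_condition E k s t u v)
  /\
  (exists (V : finType) (E : rel V) (s t : V) (k : nat) (u v : V),
      [/\ s != t, 1 <= k, E u v, edge_condition E k s t u v
        & ~ SPG_edge E k s t u v]).
Proof.
split.
  move=> V E s t k u v _ _ _ [p [Hsp Hk He]].
  have [a [b [Ep Hl]]] := @zip_split _ u v p s He.
  move: Hsp; rewrite /simple_path /gpath Ep cat_path last_cat /= => /andP[/andP[/andP[Pa Pb] Ht] U].
  have U' : uniq ((s :: a) ++ v :: b) by [].
  move: U'; rewrite cat_uniq => /and3P[Ua Hdis Ub].
  have tin : t \in v :: b by rewrite -(eqP Ht) mem_last.
  exists (size a), (size b); split.
  - exists a; split => //.
    + by rewrite /simple_path /gpath Pa Hl eqxx.
    + apply/negP => tA; move/hasP: Hdis; apply; by exists t.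
  - exists b; split => //.
    + by rewrite /simple_path /gpath (andP Pb).2 Ht.
    + apply/negP => sB; move/hasP: Hdis; apply; exists s => //; exact: mem_head.
  - by move: Hk; rewrite Ep size_cat /= addn1 addSn -addnS.
  - move=> x [H1 H2].
    have xa : x \in s :: a.
      apply: H1; split => //.
      + by rewrite /simple_path /gpath Pa Hl eqxx.
      + apply/negP => tA; move/hasP: Hdis; apply; by exists t.
    have xb : x \in v :: b.
      apply: H2; split => //.
      + by rewrite /simple_path /gpath (andP Pb).2 Ht.
      + apply/negP => sB; move/hasP: Hdis; apply; exists s => //; exact: mem_head.
    by move/hasP: Hdis; apply; exists x.
exists ('I_6 : finType), Eex, (o 0), (o 5), 6, (o 3), (o 4).
split.
- by vm_compute.
- by [].
- by vm_compute.
- exists 2, 3; split.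
  + exists [:: o 1; o 3]; split; by vm_compute.
  + exists [:: o 1; o 2; o 5]; split; by vm_compute.
  + by [].
  + move=> x [H1 H2].
    have h1 := H1 [:: o 1; o 3] (ltac:(split; by vm_compute)).
    have h2 := H1 [:: o 2; o 3] (ltac:(split; by vm_compute)).
    have h3 := H2 [:: o 1; o 2; o 5] (ltac:(split; by vm_compute)).
    have : all (fun x => ~~ [&& x \in [:: o 0; o 1; o 3], x \in [:: o 0; o 2; o 3]
                              & x \in [:: o 4; o 1; o 2; o 5]]) L6
      by vm_compute.
    move/allP => /(_ x (L6P x)).
    by rewrite h1 h2 h3.
- move=> [p [Hsp Hk He]].
  have : all (fun p => ~~ [&& simple_path Eex (o 0) (o 5) p, size p <= 6
                            & (o 3, o 4) \in path_edges (o 0) p]) (seqs _ L6 6)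
    by vm_compute.
  move/allP => /(_ p (@seqs_mem _ L6 6 p L6P Hk)).
  by rewrite Hsp Hk He.
Qed.
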